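(* Let $M$ be a magma satisfying $(xy)z = xx$ and $x(yz) = xy$ for all $x,y,z\in M$. Then $M$ satisfies $xy = xz$ and $(xy)z = xy$ for all $x,y,z\in M$ if and only if $M$ avoids the magma $E$ on $\{0,1,2,3\}$ with Cayley table \[ \begin{array}{c|cccc} E & 0 & 1 & 2 & 3 \\ \hline 0 & 2 & 3 & 2 & 2 \\ 1 & 1 & 1 & 1 & 1 \\ 2 & 2 & 2 & 2 & 2 \\ 3 & 2 & 2 & 2 & 2 \end{array}. \]
   Context: A magma is a nonempty set with a binary operation, written by juxtaposition. A magma $M$ avoids a magma $F$ if no submagma of $M$ is isomorphic to $F$. In the Cayley table, the entry in row $i$, column $j$ is $i\cdot j$. *)

(* Defs.v *)
Inductive E4 : Type := e0 | e1 | e2 | e3.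

Definition Eop (x y : E4) : E4 :=
  match x, y with
  | e0, e0 => e2 | e0, e1 => e3 | e0, e2 => e2 | e0, e3 => e2
  | e1, _ => e1
  | e2, _ => e2
  | e3, _ => e2
  end.

Definition is_submagma {M : Type} (op : M -> M -> M) (S : M -> Prop) : Prop :=
  (exists x, S x) /\ (forall x y, S x -> S y -> S (op x y)).

Definition submagma_iso {M F : Type} (op : M -> M -> M) (S : M -> Prop)
  (opF : F -> F -> F) : Prop :=
  exists f : F -> M,
    (forall a, S (f a)) /\
    (forall a b, f a = f b -> a = b) /\
    (forall x, S x -> exists a, f a = x) /\
    (forall a b, f (opF a b) = op (f a) (f b)).

Definition avoids {M F : Type} (op : M -> M -> M) (opF : F -> F -> F) : Prop :=
  ~ (exists S : M -> Prop, is_submagma op S /\ submagma_iso op S opF).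

(* Main.v *)
Require Import Defs.
From Stdlib Require Import Classical.

Theorem mainTheorem12 (M : Type) (op : M -> M -> M) (m0 : M)
  (H1 : forall x y z : M, op (op x y) z = op x x)
  (H2 : forall x y z : M, op x (op y z) = op x y) :
  ((forall x y z : M, op x y = op x z) /\
   (forall x y z : M, op (op x y) z = op x y))
  <-> avoids op Eop.
Proof.
  split.
  - intros [A B] [S [_ [f [_ [Hinj [_ Hh]]]]]].
    assert (h1 := Hh e0 e0). assert (h2 := Hh e0 e1). simpl in h1, h2.
    assert (f e2 = f e3) by (rewrite h1, h2; apply A).
    apply Hinj in H. discriminate.
  - intros Hav.
    assert (K : forall x y, op x y = op x x).
    { intros a b. destruct (classic (op a b = op a a)) as [h|h]; [exact h|].
      exfalso. apply Hav.
      set (f := fun e => match e with e0 => a | e1 => op b b | e2 => op a a | e3 => op a b end).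
      assert (d1 : a <> op a a).
      { intro E. apply h. rewrite E at 1. rewrite H1; try rewrite <- E; reflexivity. }
      assert (d2 : a <> op a b).
      { intro E. apply h. rewrite E at 1. rewrite H1; try rewrite <- E; reflexivity. }
      assert (d3 : a <> op b b).
      { intro E. apply d2. rewrite E at 2. rewrite H1. exact E. }
      assert (d4 : op b b <> op a a).
      { intro E. apply h. rewrite <- (H2 a b b), E, H2. reflexivity. }
      assert (d5 : op b b <> op a b).
      { intro E. apply d4. rewrite <- (H1 b b b), E, H1. reflexivity. }
      assert (hom : forall x y, f (Eop x y) = op (f x) (f y)).
      { intros x y; destruct x, y; simpl; symmetry;
          first [ reflexivity | rewrite H1; reflexivity | rewrite H2; reflexivity ]. }
      exists (fun x => exists e, f e = x). split.
      + split. exists a, e0; reflexivity.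
        intros x y [u <-] [v <-]. exists (Eop u v). apply hom.
      + exists f. split; [intro e; exists e; reflexivity|].
        split; [|split; [intros x [e <-]; exists e; reflexivity| exact hom]].
        intros x y; destruct x, y; simpl; intro E; try reflexivity; exfalso;
          first [ exact (d1 E) | exact (d1 (eq_sym E)) | exact (d2 E) | exact (d2 (eq_sym E))
                | exact (d3 E) | exact (d3 (eq_sym E)) | exact (d4 E) | exact (d4 (eq_sym E))
                | exact (d5 E) | exact (d5 (eq_sym E)) | exact (h (eq_sym E)) | exact (h E) ]. }
    split.
    + intros x y z. rewrite (K x y), (K x z). reflexivity.
    + intros x y z. rewrite H1. symmetry. apply K.
Qed.
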